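(* In the setting described in the context, for any $n\ge1$, any $1\le k\le n$ and any $\tau'\in\mathcal{S}_{n-k}$, the set $$\Big\{\tau\in\mathcal{T}_n:\tau\prec\tau',\ \mathcal{I}(\tau)\cap\bigcup_{P\in\mathcal{C}_{n,k}}\Delta(P)\neq\emptyset\Big\}$$ contains at most two vertices.
   Context: Standing setup. Let $s,t>0$ with $s+t=1$, and let $\theta\in\mathbb{R}$ with $\inf_{q\in\mathbb{N}}q^{1/s}\|q\theta\|>0$, where $\|x\|$ is the distance from $x$ to the nearest integer. Let $\beta\in(0,1)$, let $A_0$ be a compact interval of length $l>0$, let $R=16\beta^{-4}$, and let $c=\min\{\inf_{q\in\mathbb{N}}q^{1/s}\|q\theta\|,\ \tfrac14 lR^{-1},\ \tfrac18R^{-2-3/t^2}\}$. Rational points are written $P=(p/q,r/q)$ with $q>0$ and $p,q,r$ coprime integers. Let $\mathcal{C}=\{(p/q,r/q)\in\mathbb{Q}^2:|\theta-p/q|<c/q^{1+s}\}$ and $\Delta(P)=\{y\in\mathbb{R}:|y-r/q|<c/q^{1+t}\}$. Non-vertical rational lines are written $L(A,B,C)=\{(x,y):y=(Ax+C)/B\}$ with $A,B,C$ coprime integers, $B>0$. For each $P=(p/q,r/q)\in\mathcal{C}$ fix a line $L_P=L(A_P,B_P,C_P)$ passing through $P$ with $|A_P|\le q^s$ and $B_P\le q^t$ (such a line exists). Let $H_n=4cl^{-1}R^n$ and $\mathcal{C}_n=\{P=(p/q,r/q)\in\mathcal{C}:H_n\le qB_P<H_{n+1}\}$ for $n\ge1$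 (these partition $\mathcal{C}$). Let $\lambda=3/t^2$, $\mu=1/(t(1+t))$, $\mathcal{C}_{n,1}=\{P\in\mathcal{C}_n:H_{n+1}^{t/(1+t)}R^{-\lambda}\le B_P<H_{n+1}^{t/(1+t)}\}$ and, for $2\le k\le n$, $\mathcal{C}_{n,k}=\{P\in\mathcal{C}_n:H_{n+1}^{t/(1+t)}R^{-\lambda-(k-1)\mu}\le B_P<H_{n+1}^{t/(1+t)}R^{-\lambda-(k-2)\mu}\}$. Let $\mathcal{T}$ be an $[R]$-regular rooted tree with root $\tau_0$ ($[\cdot]$ = integer part), $\mathcal{T}_n$ its vertices of height $n$, and $\tau\prec\tau'$ meaning $\tau'$ is an ancestor of $\tau$ (possibly equal). Fix an injective map $\mathcal{I}$ from $\mathcal{T}$ to closed subintervals of $A_0$ with $|\mathcal{I}(\tau)|=lR^{-n}$ for $\tau\in\mathcal{T}_n$, $\mathcal{I}(\tau)\subset\mathcal{I}(\tau')$ whenever $\tau\prec\tau'$, and such that for each $\tau'$ the intervals $\mathcal{I}(\tau)$ over successors $\tau$ of $\tau'$ have pairwise disjoint interiors and connected union. Define $\mathcal{S}_0=\{\tau_0\}$ and for $n\ge1$, $\mathcal{S}_n=\{\tau:\tau$ is a successor of some vertex in $\mathcal{S}_{n-1}$ and $\mathcal{I}(\tau)\cap\bigcup_{P\in\mathcal{C}_n}\Delta(P)=\emptyset\}$. *)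

(* Defs.v *)
From Stdlib Require Import Reals Lra Lia ZArith List.
Open Scope R_scope.

Definition floorZ (x : R) : Z := (up x - 1)%Z.

Definition dnint (x : R) : R :=
  Rmin (x - IZR (floorZ x)) (IZR (floorZ x) + 1 - x).

Definition is_glb (E : R -> Prop) (m : R) : Prop :=
  (forall v, E v -> m <= v) /\ (forall m', (forall v, E v -> m' <= v) -> m' <= m).

Definition dioph_set (s theta : R) (v : R) : Prop :=
  exists q : nat, (1 <= q)%nat /\ v = Rpower (INR q) (1 / s) * dnint (INR q * theta).

Definition Rc (beta : R) : R := 16 / beta ^ 4.

Definition cc (kappa l beta t : R) : R :=
  Rmin kappa (Rmin (l / (4 * Rc beta)) (/ 8 * Rpower (Rc beta) (-2 - 3 / t ^ 2))).

(* A rational point P = (p/q, r/q) is encoded by the triple (p,q,r) with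
   q > 0 and gcd(p,q,r) = 1. *)
Definition pt_p (P : Z * Z * Z) : Z := fst (fst P).
Definition pt_q (P : Z * Z * Z) : Z := snd (fst P).
Definition pt_r (P : Z * Z * Z) : Z := snd P.

Definition ratpt (P : Z * Z * Z) : Prop :=
  (0 < pt_q P)%Z /\ Z.gcd (Z.gcd (pt_p P) (pt_q P)) (pt_r P) = 1%Z.

Definition inC (s theta c : R) (P : Z * Z * Z) : Prop :=
  ratpt P /\
  Rabs (theta - IZR (pt_p P) / IZR (pt_q P)) < c / Rpower (IZR (pt_q P)) (1 + s).

Definition inDelta (t c : R) (P : Z * Z * Z) (y : R) : Prop :=
  Rabs (y - IZR (pt_r P) / IZR (pt_q P)) < c / Rpower (IZR (pt_q P)) (1 + t).

(* A non-vertical rational line L(A,B,C) = {y = (Ax+C)/B} encoded by (A,B,C),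
   with A,B,C coprime and B > 0. *)
Definition ln_A (L : Z * Z * Z) : Z := fst (fst L).
Definition ln_B (L : Z * Z * Z) : Z := snd (fst L).
Definition ln_C (L : Z * Z * Z) : Z := snd L.

Definition line_ok (L : Z * Z * Z) : Prop :=
  (0 < ln_B L)%Z /\ Z.gcd (Z.gcd (ln_A L) (ln_B L)) (ln_C L) = 1%Z.

(* (p/q, r/q) lies on y = (Ax+C)/B  iff  B r = A p + C q  (q, B > 0) *)
Definition passes (L P : Z * Z * Z) : Prop :=
  (ln_B L * pt_r P = ln_A L * pt_p P + ln_C L * pt_q P)%Z.

Definition LP_ok (s t theta c : R) (LP : Z * Z * Z -> Z * Z * Z) : Prop :=
  forall P, inC s theta c P ->
    line_ok (LP P) /\ passes (LP P) P /\
    IZR (Z.abs (ln_A (LP P))) <= Rpower (IZR (pt_q P)) s /\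
    IZR (ln_B (LP P)) <= Rpower (IZR (pt_q P)) t .

Definition Hn (c l beta : R) (n : nat) : R := 4 * c / l * Rc beta ^ n.

Definition inCn (s theta c l beta : R) (LP : Z * Z * Z -> Z * Z * Z) (n : nat)
  (P : Z * Z * Z) : Prop :=
  inC s theta c P /\
  Hn c l beta n <= IZR (pt_q P * ln_B (LP P)) < Hn c l beta (S n).

Definition inCnk (s t theta c l beta : R) (LP : Z * Z * Z -> Z * Z * Z)
  (n k : nat) (P : Z * Z * Z) : Prop :=
  let lam := 3 / t ^ 2 in
  let mu := 1 / (t * (1 + t)) in
  let h := Rpower (Hn c l beta (S n)) (t / (1 + t)) in
  let B := IZR (ln_B (LP P)) in
  inCn s theta c l beta LP n P /\
  (if (k =? 1)%nat then h * Rpower (Rc beta) (- lam) <= B < h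
   else h * Rpower (Rc beta) (- lam - INR (k - 1) * mu) <= B
        < h * Rpower (Rc beta) (- lam - INR (k - 2) * mu)).

(* The [R]-regular rooted tree: vertices are words over {0,...,[R]-1};
   the root is the empty word, the height is the length, the successors
   of tau' are tau' ++ [i], and tau is a descendant of tau' (tau ≺ tau')
   iff tau' is a prefix of tau. *)
Definition deg (beta : R) : nat := Z.to_nat (floorZ (Rc beta)).

Definition vertex (beta : R) (tau : list nat) : Prop :=
  Forall (fun i => (i < deg beta)%nat) tau.

Definition prec (tau tau' : list nat) : Prop := exists u, tau = tau' ++ u.

(* intervals: (a, b) stands for the closed interval [a, b] *)
Definition inI (J : R * R) (x : R) : Prop := fst J <= x <= snd J.

Definition I_ok (beta a0 l : R) (I : list nat -> R * R) : Prop :=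
  (forall tau, vertex beta tau ->
     snd (I tau) - fst (I tau) = l / Rc beta ^ length tau /\
     a0 <= fst (I tau) /\ snd (I tau) <= a0 + l) /\
  (forall tau1 tau2, vertex beta tau1 -> vertex beta tau2 ->
     I tau1 = I tau2 -> tau1 = tau2) /\
  (forall tau tau', vertex beta tau -> vertex beta tau' -> prec tau tau' ->
     fst (I tau') <= fst (I tau) /\ snd (I tau) <= snd (I tau')) /\
  (forall tau', vertex beta tau' -> forall i j,
     (i < deg beta)%nat -> (j < deg beta)%nat -> i <> j ->
     forall x, ~ (fst (I (tau' ++ i :: nil)) < x < snd (I (tau' ++ i :: nil)) /\
                  fst (I (tau' ++ j :: nil)) < x < snd (I (tau' ++ j :: nil)))) /\
  (forall tau', vertex beta tau' -> forall x y z, x <= y <= z ->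
     (exists i, (i < deg beta)%nat /\ inI (I (tau' ++ i :: nil)) x) ->
     (exists i, (i < deg beta)%nat /\ inI (I (tau' ++ i :: nil)) z) ->
     (exists i, (i < deg beta)%nat /\ inI (I (tau' ++ i :: nil)) y)).

Fixpoint inS (s t theta c l beta : R) (LP : Z * Z * Z -> Z * Z * Z)
  (I : list nat -> R * R) (n : nat) (tau : list nat) : Prop :=
  match n with
  | O => tau = nil
  | S m => exists tau' i, (i < deg beta)%nat /\ tau = tau' ++ i :: nil /\
      inS s t theta c l beta LP I m tau' /\
      (forall P, inCn s theta c l beta LP (S m) P ->
         forall y, inI (I tau) y -> ~ inDelta t c P y)
  end.

(* Main.v *)
Require Import Defs.
From Stdlib Require Import Reals Lra Lia ZArith List Psatz.
Open Scope R_scope.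

Lemma prim_eq (a b c a' b' c' : Z) :
  (0 < b)%Z -> (0 < b')%Z ->
  Z.gcd (Z.gcd a b) c = 1%Z -> Z.gcd (Z.gcd a' b') c' = 1%Z ->
  (a * b' = a' * b)%Z -> (c * b' = c' * b)%Z ->
  a = a' /\ b = b' /\ c = c'.
Proof.
  intros hb hb' g g' e1 e2.
  assert (d1 : (b | b')%Z).
  { assert (H : Z.gcd (Z.gcd (a * b') (b * b')) (c * b') = b').
    { rewrite !Z.gcd_mul_mono_r_nonneg by lia. rewrite g. lia. }
    rewrite <- H. apply Z.gcd_greatest; [apply Z.gcd_greatest|].
    - exists a'; nia.
    - exists b'; nia.
    - exists c'; nia. }
  assert (d2 : (b' | b)%Z).
  { assert (H : Z.gcd (Z.gcd (a' * b) (b' * b)) (c' * b) = b).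
    { rewrite !Z.gcd_mul_mono_r_nonneg by lia. rewrite g'. lia. }
    rewrite <- H. apply Z.gcd_greatest; [apply Z.gcd_greatest|].
    - exists a; nia.
    - exists b; nia.
    - exists c; nia. }
  assert (eb : b = b') by (apply Z.divide_antisym_nonneg; auto; lia).
  subst b'. split; [|split]; auto.
  - apply Z.mul_cancel_r with b; lia.
  - apply Z.mul_cancel_r with b; lia.
Qed.

Lemma triple_eta (x : Z * Z * Z) : x = ((fst (fst x), snd (fst x)), snd x).
Proof. destruct x as [[a b] c]; reflexivity. Qed.

Lemma lines_eq (L L' : Z * Z * Z) : line_ok L -> line_ok L' ->
  (ln_A L * ln_B L' = ln_A L' * ln_B L)%Z ->
  (ln_C L * ln_B L' = ln_C L' * ln_B L)%Z -> L = L'.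
Proof.
  unfold line_ok, ln_A, ln_B, ln_C. intros [h1 g1] [h2 g2] e1 e2.
  destruct (prim_eq _ _ _ _ _ _ h1 h2 g1 g2 e1 e2) as [? [? ?]].
  rewrite (triple_eta L), (triple_eta L'). congruence.
Qed.

Lemma points_eq (P P' : Z * Z * Z) : ratpt P -> ratpt P' ->
  (pt_p P * pt_q P' = pt_p P' * pt_q P)%Z ->
  (pt_r P * pt_q P' = pt_r P' * pt_q P)%Z -> P = P'.
Proof.
  unfold ratpt, pt_p, pt_q, pt_r. intros [h1 g1] [h2 g2] e1 e2.
  destruct (prim_eq _ _ _ _ _ _ h1 h2 g1 g2 e1 e2) as [? [? ?]].
  rewrite (triple_eta P), (triple_eta P'). congruence.
Qed.

Lemma two_points (P1 P2 L L' : Z * Z * Z) :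
  ratpt P1 -> ratpt P2 -> line_ok L -> line_ok L' ->
  passes L P1 -> passes L P2 -> passes L' P1 -> passes L' P2 ->
  P1 = P2 \/ L = L'.
Proof.
  intros hP1 hP2 hL hL' e1 e2 e3 e4.
  pose proof hP1 as [q1p _]. pose proof hP2 as [q2p _].
  pose proof hL as [b1p _]. pose proof hL' as [b2p _].
  unfold passes in *.
  set (p1 := pt_p P1) in *. set (q1 := pt_q P1) in *. set (r1 := pt_r P1) in *.
  set (p2 := pt_p P2) in *. set (q2 := pt_q P2) in *. set (r2 := pt_r P2) in *.
  set (A := ln_A L) in *. set (B := ln_B L) in *. set (C := ln_C L) in *.
  set (A' := ln_A L') in *. set (B' := ln_B L') in *. set (C' := ln_C L') in *.
  assert (f1 : (A * (p1*q2 - p2*q1) = B * (r1*q2 - r2*q1))%Z) by nia.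
  assert (f2 : (A' * (p1*q2 - p2*q1) = B' * (r1*q2 - r2*q1))%Z) by nia.
  destruct (Z.eq_dec (p1*q2 - p2*q1) 0) as [h0|h0].
  - left. rewrite h0 in f1. assert (r1*q2 - r2*q1 = 0)%Z by nia.
    apply points_eq; auto; unfold p1,q1,r1,p2,q2,r2 in *; lia.
  - right. assert (g : (A * B' = A' * B)%Z).
    { apply Z.mul_cancel_r with (p1*q2 - p2*q1)%Z; auto.
      transitivity (B * (r1*q2 - r2*q1) * B')%Z; [nia|].
      rewrite <- f1. nia. }
    apply lines_eq; auto. fold A B C A' B' C'.
    apply Z.mul_cancel_r with q1; [lia|].
    transitivity (B*B'*r1 - (A*B')*p1)%Z; [nia|]. rewrite g. nia.
Qed.

Lemma reduce_pt (X Y D : Z) : D <> 0%Z ->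
  exists P, ratpt P /\ (pt_q P <= Z.abs D)%Z /\
    IZR (pt_p P) / IZR (pt_q P) = IZR X / IZR D /\
    IZR (pt_r P) / IZR (pt_q P) = IZR Y / IZR D.
Proof.
  intros hD.
  set (p0 := (Z.sgn D * X)%Z). set (r0 := (Z.sgn D * Y)%Z). set (d := Z.abs D).
  assert (dpos : (0 < d)%Z) by (unfold d; lia).
  set (g := Z.gcd (Z.gcd p0 d) r0).
  assert (gpos : (0 < g)%Z).
  { assert (0 <= g)%Z by apply Z.gcd_nonneg.
    assert (g <> 0)%Z; [|lia].
    intro h. apply Z.gcd_eq_0 in h. destruct h as [h _]. apply Z.gcd_eq_0 in h. lia. }
  assert (gd : (g | Z.gcd p0 d)%Z) by apply Z.gcd_divide_l.
  assert (gp : (g | p0)%Z) by (eapply Z.divide_trans; [exact gd| apply Z.gcd_divide_l]).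
  assert (gdd : (g | d)%Z) by (eapply Z.divide_trans; [exact gd| apply Z.gcd_divide_r]).
  assert (gr : (g | r0)%Z) by apply Z.gcd_divide_r.
  exists ((p0 / g, d / g), r0 / g)%Z.
  unfold ratpt, pt_p, pt_q, pt_r; simpl.
  destruct gp as [a ha]. destruct gdd as [b hb]. destruct gr as [e he].
  assert (ea : (p0 / g = a)%Z) by (rewrite ha; apply Z.div_mul; lia).
  assert (eb : (d / g = b)%Z) by (rewrite hb; apply Z.div_mul; lia).
  assert (ee : (r0 / g = e)%Z) by (rewrite he; apply Z.div_mul; lia).
  assert (bpos : (0 < b)%Z) by nia.
  split; [split|split;[|split]].
  - lia.
  - rewrite Z.gcd_div_factor; try lia.
    2, 3: unfold g; auto with zarith.
    + rewrite Z.gcd_div_factor; try lia; auto.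
      * fold g. apply Z.div_same. lia.
      * apply Z.gcd_divide_r.
    + exists a; lia.
    + exists b; lia.
  - rewrite eb. nia.
  - rewrite ea, eb.
    assert (gR : IZR g > 0) by (apply IZR_lt; lia).
    assert (bR : IZR b > 0) by (apply IZR_lt; lia).
    assert (sD : IZR (Z.sgn D) <> 0) by (apply not_0_IZR; destruct D; simpl; lia).
    assert (DR : IZR D <> 0) by (apply not_0_IZR; auto).
    replace (IZR a / IZR b) with (IZR p0 / IZR d).
    2:{ rewrite ha, hb, !mult_IZR. field. lra. }
    unfold p0, d. rewrite <- Z.sgn_abs, !mult_IZR. field. auto.
  - rewrite ee, eb.
    assert (gR : IZR g > 0) by (apply IZR_lt; lia).
    assert (bR : IZR b > 0) by (apply IZR_lt; lia).
    assert (sD : IZR (Z.sgn D) <> 0) by (apply not_0_IZR; destruct D; simpl; lia).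
    assert (DR : IZR D <> 0) by (apply not_0_IZR; auto).
    replace (IZR e / IZR b) with (IZR r0 / IZR d).
    2:{ rewrite he, hb, !mult_IZR. field. lra. }
    unfold r0, d. rewrite <- Z.sgn_abs, !mult_IZR. field. auto.
Qed.

Lemma common_prefix (a b : list nat) : length a = length b -> a <> b ->
  exists u i j v w, i <> j /\ a = u ++ i :: v /\ b = u ++ j :: w.
Proof.
  revert b; induction a as [|x a IH]; intros b hl hne; destruct b as [|y b];
    simpl in *; try congruence.
  destruct (Nat.eq_dec x y) as [e|e].
  - subst y. destruct (IH b) as (u & i & j & v & w & h1 & h2 & h3); try congruence.
    exists (x :: u), i, j, v, w. subst. auto.
  - exists nil, x, y, a, b. auto.
Qed.

Lemma Rc_ge (beta : R) : 0 < beta < 1 -> 16 < Rc beta.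
Proof.
  intros [h1 h2]. unfold Rc.
  assert (0 < beta ^ 4) by (apply pow_lt; lra).
  assert (beta ^ 4 < 1).
  { apply pow_lt_1_compat; [lra|lia]. }
  apply Rmult_lt_reg_r with (beta ^ 4); auto.
  unfold Rdiv. rewrite Rmult_assoc, Rinv_l by lra. nra.
Qed.

Lemma inS_vertex s t theta c l beta LP I N tau :
  inS s t theta c l beta LP I N tau -> vertex beta tau /\ length tau = N.
Proof.
  revert tau; induction N as [|N IH]; simpl; intros tau h.
  - subst. split; [constructor|reflexivity].
  - destruct h as (tau0 & i & hi & e & h & _). subst.
    destruct (IH _ h) as [v hl]. split.
    + apply Forall_app; split; auto.
    + rewrite length_app; simpl; lia.
Qed.

Lemma I_nest beta a0 l I tau tau' y : I_ok beta a0 l I ->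
  vertex beta tau -> vertex beta tau' -> prec tau tau' ->
  inI (I tau) y -> inI (I tau') y.
Proof.
  intros (_ & _ & hn & _) v v' p [h1 h2].
  destruct (hn tau tau' v v' p). split; lra.
Qed.

Lemma vertex_prec beta tau tau' : vertex beta tau -> prec tau tau' -> vertex beta tau'.
Proof.
  intros v [u e]; subst. unfold vertex in *. apply Forall_app in v; tauto.
Qed.

Lemma I_sep beta a0 l I tau1 tau2 : 0 < beta < 1 -> 0 < l -> I_ok beta a0 l I ->
  vertex beta tau1 -> vertex beta tau2 -> length tau1 = length tau2 -> tau1 <> tau2 ->
  snd (I tau1) <= fst (I tau2) \/ snd (I tau2) <= fst (I tau1).
Proof.
  intros hb hl hI v1 v2 hlen hne.
  pose proof (Rc_ge beta hb) as hR.
  destruct (common_prefix _ _ hlen hne) as (u & i & j & v & w & hij & e1 & e2).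
  pose proof hI as (hsz & _ & hn & hd & _).
  assert (vi : vertex beta (u ++ i :: nil)).
  { apply vertex_prec with tau1; auto. exists v. rewrite e1, <- app_assoc. reflexivity. }
  assert (vj : vertex beta (u ++ j :: nil)).
  { apply vertex_prec with tau2; auto. exists w. rewrite e2, <- app_assoc. reflexivity. }
  assert (vu : vertex beta u) by (apply vertex_prec with (u ++ i :: nil); auto; exists (i :: nil); auto).
  assert (ilt : (i < deg beta)%nat).
  { unfold vertex in vi. apply Forall_app in vi. destruct vi as [_ h]. inversion h; auto. }
  assert (jlt : (j < deg beta)%nat).
  { unfold vertex in vj. apply Forall_app in vj. destruct vj as [_ h]. inversion h; auto. }
  destruct (hn tau1 (u ++ i :: nil) v1 vi) as [n1 n2].
  { exists v. rewrite e1, <- app_assoc. reflexivity. }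
  destruct (hn tau2 (u ++ j :: nil) v2 vj) as [n3 n4].
  { exists w. rewrite e2, <- app_assoc. reflexivity. }
  assert (L1 : fst (I tau1) < snd (I tau1)).
  { destruct (hsz tau1 v1) as [h _].
    assert (0 < l / Rc beta ^ length tau1).
    { apply Rdiv_lt_0_compat; auto. apply pow_lt; lra. }
    lra. }
  assert (L2 : fst (I tau2) < snd (I tau2)).
  { destruct (hsz tau2 v2) as [h _].
    assert (0 < l / Rc beta ^ length tau2).
    { apply Rdiv_lt_0_compat; auto. apply pow_lt; lra. }
    lra. }
  destruct (Rle_dec (snd (I tau1)) (fst (I tau2))) as [h|h]; [left; auto|].
  destruct (Rle_dec (snd (I tau2)) (fst (I tau1))) as [h'|h']; [right; auto|].
  exfalso.
  set (x := (Rmax (fst (I tau1)) (fst (I tau2)) + Rmin (snd (I tau1)) (snd (I tau2))) / 2).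
  apply (hd u vu i j ilt jlt hij x).
  unfold x, Rmax, Rmin.
  destruct (Rle_dec (fst (I tau1)) (fst (I tau2)));
  destruct (Rle_dec (snd (I tau1)) (snd (I tau2))); lra.
Qed.

Lemma survive s t theta c l beta LP I a0 N tau : I_ok beta a0 l I ->
  inS s t theta c l beta LP I N tau ->
  forall m P y, (1 <= m <= N)%nat -> inCn s theta c l beta LP m P ->
  inI (I tau) y -> ~ inDelta t c P y.
Proof.
  intros hI. revert tau; induction N as [|N IH]; intros tau h m P y hm hP hy.
  - lia.
  - pose proof (inS_vertex _ _ _ _ _ _ _ _ _ _ h) as [vt _].
    simpl in h. destruct h as (tau0 & i & hi & e & h0 & hc).
    destruct (Nat.eq_dec m (S N)) as [em|em].
    + subst m. apply (hc P hP y hy).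
    + apply (IH tau0 h0 m P y); [lia|auto|].
      pose proof (inS_vertex _ _ _ _ _ _ _ _ _ _ h0) as [v0 _].
      apply I_nest with beta a0 l tau; auto. exists (i :: nil). auto.
Qed.

Lemma Rpower_pos x y : 0 < Rpower x y.
Proof. unfold Rpower. apply exp_pos. Qed.

Lemma Rpower_1plus q e : 0 < q -> Rpower q (1 + e) = q * Rpower q e.
Proof. intros h. rewrite Rpower_plus, Rpower_1; auto. Qed.

Lemma dist_Y (s t th c p q r A B C y : R) :
  0 < c -> 1 <= q -> 1 <= B -> B * r = A * p + C * q ->
  Rabs A <= Rpower q s -> B <= Rpower q t ->
  Rabs (th - p / q) < c / Rpower q (1 + s) ->
  Rabs (y - r / q) < c / Rpower q (1 + t) ->
  Rabs (r / q - (A * th + C) / B) <= c / (q * B) /\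
  Rabs (y - (A * th + C) / B) < 2 * c / (q * B).
Proof.
  intros hc hq hB e hA hBt hth hy.
  rewrite Rpower_1plus in hth, hy by lra.
  pose proof (Rpower_pos q s). pose proof (Rpower_pos q t).
  assert (h1 : Rabs (r / q - (A * th + C) / B) <= c / (q * B)).
  { replace (r / q - (A * th + C) / B) with (A * (p / q - th) / B).
    2:{ apply Rmult_eq_reg_r with (q * B); [|nra].
        field_simplify; try lra. }
    unfold Rdiv. rewrite !Rabs_mult. rewrite (Rabs_inv B), (Rabs_right B) by lra.
    rewrite Rabs_minus_sym.
    assert (Rabs (th - p * / q) <= c / (q * Rpower q s)) by (unfold Rdiv in *; lra).
    apply Rle_trans with (Rpower q s * (c / (q * Rpower q s)) * / B).
    - apply Rmult_le_compat_r; [left; apply Rinv_0_lt_compat; lra|].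
      apply Rmult_le_compat; auto using Rabs_pos.
    - right. field. split; lra. }
  split; auto.
  assert (c / (q * Rpower q t) <= c / (q * B)).
  { apply Rmult_le_compat_l; [lra|]. apply Rinv_le_contravar; nra. }
  pose proof (Rabs_triang (y - r / q) (r / q - (A * th + C) / B)).
  replace (y - r / q + (r / q - (A * th + C) / B)) with (y - (A * th + C) / B) in * by ring.
  unfold Rdiv in *. lra.
Qed.

Lemma num2 (t rho lH K l2 : R) :
  0 < t < 1 -> 0 < l2 -> 4 * l2 <= rho -> 2 <= K ->
  let lam := 3 / t ^ 2 in let mu := 1 / (t * (1 + t)) in let s := 1 - t in
  let lw := t / (1 + t) * lH - (lam + (K - 2) * mu) * rho in
  let M := s * lH + t * lw + s * mu * rho in
  (1 + t) * (l2 + M) <= lH - K * rho - rho /\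
  2 * l2 + rho + (1 + t) * (l2 + M) <= lH /\
  (1 + t) * (l2 + M) + 3 * l2 + (K + 1) * rho - lH <= 0 /\
  2 * lw + s * (l2 + M) + 3 * l2 + (K + 1) * rho - lH <= 0 /\
  (0 < lH -> - (2 + lam) * rho + (K + 1) * rho + 2 * lw <= lH).
Proof.
  intros [t0 t1] hl2 hrho hK lam mu s lw M.
  assert (rp : 0 < rho) by lra.
  assert (tt1 : 1 < / t).
  { rewrite <- Rinv_1. apply Rinv_lt_contravar; lra. }
  assert (I1 : (1 + t) * M = lH - (K + 2 + 2 / t) * rho).
  { unfold M, lw, s, mu, lam. field. lra. }
  assert (I2 : 2 * lw + s * M = lH - ((2 + s * t) * (lam + (K - 2) * mu) - s * s * mu) * rho).
  { unfold M, lw, s, mu, lam. field. lra. }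
  assert (mu12 : 1 / 2 <= mu).
  { unfold mu. apply Rmult_le_reg_r with (t * (1 + t)); [nra|].
    replace (1 / (t * (1 + t)) * (t * (1 + t))) with 1 by (field; lra). nra. }
  assert (mult : mu <= / t ^ 2).
  { unfold mu. apply Rmult_le_reg_r with (t * (1 + t)); [nra|].
    replace (1 / (t * (1 + t)) * (t * (1 + t))) with 1 by (field; lra).
    replace (/ t ^ 2 * (t * (1 + t))) with (/ t + 1) by (field; lra). lra. }
  assert (lamv : lam = 3 * / t ^ 2) by (unfold lam; field; lra).
  assert (tt2 : 1 < / t ^ 2).
  { rewrite <- Rinv_1. apply Rinv_lt_contravar; nra. }
  assert (e2t : 2 / t = 2 * / t) by (field; lra).
  assert (s0 : 0 < s) by (unfold s; lra).
  assert (s1 : s < 1) by (unfold s; lra).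
  assert (st0 : 0 < s * t) by nra.
  assert (mupos : 0 < mu) by lra.
  assert (Kmu : 0 <= (K - 2) * mu) by nra.
  assert (lampos : 3 <= lam) by (rewrite lamv; lra).
  assert (coef : K + 2 + 1 <= (2 + s * t) * (lam + (K - 2) * mu) - s * s * mu).
  {     assert (s * s * mu <= mu).
    { assert (s * s <= 1) by nra. replace mu with (1 * mu) at 2 by ring. apply Rmult_le_compat_r; lra. }
    assert (0 <= s * t * (lam + (K-2)*mu)) by (apply Rmult_le_pos; lra).
    assert ((2 + s*t) * (lam + (K-2)*mu) >= 2 * (lam + (K-2) * mu)).
    { replace ((2 + s*t) * (lam + (K-2)*mu)) with (2 * (lam + (K-2)*mu) + s * t * (lam + (K-2)*mu)) by ring. lra. }
    assert (2 * ((K - 2) * mu) >= K - 2) by nra.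
    nra. }
  repeat split.
  - rewrite Rmult_plus_distr_l, I1. assert (0 <= 2 / t * rho) by (rewrite e2t; nra). nra.
  - rewrite Rmult_plus_distr_l, I1. assert (0 <= 2 / t * rho) by (rewrite e2t; nra). nra.
  - rewrite Rmult_plus_distr_l, I1. assert (2 * rho <= 2 / t * rho) by (rewrite e2t; nra). nra.
  - replace (2 * lw + s * (l2 + M)) with (s * l2 + (2 * lw + s * M)) by ring. rewrite I2.
    assert (0 <= s * l2 <= l2) by (split; nra).
    assert ((K + 2 + 1) * rho <= ((2 + s * t) * (lam + (K - 2) * mu) - s * s * mu) * rho) by nra.
    nra.
  - intros hH. unfold lw.
    assert (t / (1 + t) < 1 / 2).
    { apply Rmult_lt_reg_r with (2 * (1 + t)); [lra|].
      replace (t / (1 + t) * (2 * (1 + t))) with (2 * t) by (field; lra). lra. }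
    assert (2 * (t / (1 + t) * lH) <= lH) by (assert (0 < t / (1 + t)) by (apply Rdiv_lt_0_compat; lra); nra).
    assert (K - 1 - 3 * lam - 2 * ((K - 2) * mu) <= 0) by (rewrite lamv; nra).
    assert ((K - 1 - 3 * lam - 2 * ((K - 2) * mu)) * rho <= 0) by nra.
    nra.
Qed.

Lemma Rpower_le_1plus x s : 0 < x -> 0 <= s <= 1 -> Rpower x s <= 1 + x.
Proof.
  intros hx hs. unfold Rpower.
  destruct (Rle_dec x 1) as [h|h].
  - assert (ln x <= 0).
    { destruct (Req_dec x 1) as [e|e]. subst; rewrite ln_1; lra.
      left. rewrite <- ln_1. apply ln_increasing; lra. }
    assert (exp (s * ln x) <= exp 0).
    { destruct (Req_dec (s * ln x) 0) as [e|e]. rewrite e; lra.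
      left; apply exp_increasing. nra. }
    rewrite exp_0 in *. lra.
  - assert (0 <= ln x) by (left; rewrite <- ln_1; apply ln_increasing; lra).
    assert (exp (s * ln x) <= exp (ln x)).
    { destruct (Req_dec (s * ln x) (ln x)) as [e|e]. rewrite e; lra.
      left; apply exp_increasing. nra. }
    rewrite exp_ln in *; lra.
Qed.

Lemma k1_on_line (s t th c RR H X : R) (p1 q1 r1 A1 B1 C1 p2 q2 r2 A2 B2 C2 : Z) (y1 y2 : R) :
  0 < s -> 0 < t -> s + t = 1 -> 0 < c -> 16 <= RR -> 1 <= X -> 8 * c * RR ^ 2 * X <= 1 ->
  0 < H ->
  (1 <= q1)%Z -> (1 <= B1)%Z -> (B1 * r1 = A1 * p1 + C1 * q1)%Z ->
  Rabs (IZR A1) <= Rpower (IZR q1) s -> IZR B1 <= Rpower (IZR q1) t ->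
  Rabs (th - IZR p1 / IZR q1) < c / Rpower (IZR q1) (1 + s) ->
  Rabs (y1 - IZR r1 / IZR q1) < c / Rpower (IZR q1) (1 + t) ->
  (1 <= q2)%Z -> (1 <= B2)%Z -> (B2 * r2 = A2 * p2 + C2 * q2)%Z ->
  Rabs (IZR A2) <= Rpower (IZR q2) s -> IZR B2 <= Rpower (IZR q2) t ->
  Rabs (th - IZR p2 / IZR q2) < c / Rpower (IZR q2) (1 + s) ->
  Rabs (y2 - IZR r2 / IZR q2) < c / Rpower (IZR q2) (1 + t) ->
  H / RR <= IZR q1 * IZR B1 < H -> H / RR <= IZR q2 * IZR B2 < H ->
  IZR B1 < X * IZR B2 -> IZR B2 < X * IZR B1 ->
  Rabs (y1 - y2) <= 4 * c * RR ^ 2 / H ->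
  (B1 * r2 = A1 * p2 + C1 * q2)%Z.
Proof.
  intros hs ht hst hc hR hX hcX hH hq1 hB1 e1 hA1 hBt1 hth1 hy1
    hq2 hB2 e2 hA2 hBt2 hth2 hy2 hQ1 hQ2 hr12 hr21 hy12.
  apply IZR_le in hq1, hB1, hq2, hB2.
  set (Q1 := IZR q1) in *. set (Q2 := IZR q2) in *. set (b1 := IZR B1) in *. set (b2 := IZR B2) in *.
  assert (e1RR : b1 * IZR r1 = IZR A1 * IZR p1 + IZR C1 * Q1) by (unfold b1, Q1; rewrite <- !mult_IZR, <- plus_IZR; f_equal; auto).
  assert (e2RR : b2 * IZR r2 = IZR A2 * IZR p2 + IZR C2 * Q2) by (unfold b2, Q2; rewrite <- !mult_IZR, <- plus_IZR; f_equal; auto).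
  destruct (dist_Y _ _ _ _ _ _ _ _ _ _ _ hc hq1 hB1 e1RR hA1 hBt1 hth1 hy1) as [_ d1].
  set (Y1 := (IZR A1 * th + IZR C1) / b1) in *.
  set (N := (B1 * r2 - A1 * p2 - C1 * q2)%Z).
  assert (eN : IZR N = Q2 * (b1 * (IZR r2 / Q2 - Y1) + IZR A1 * (th - IZR p2 / Q2))).
  { unfold N, Y1. rewrite !minus_IZR, !mult_IZR. fold b1 Q2. field. split; lra. }
  pose proof (Rpower_pos Q1 s). pose proof (Rpower_pos Q2 s). pose proof (Rpower_pos Q2 t).
  assert (a1 : Rabs (IZR r2 / Q2 - Y1) < c / (Q2 * b2) + 4 * c * RR ^ 2 / H + 2 * c / (Q1 * b1)).
  { assert (Rabs (IZR r2 / Q2 - y2) < c / (Q2 * b2)).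
    { rewrite Rabs_minus_sym. eapply Rlt_le_trans; [exact hy2|].
      rewrite Rpower_1plus by lra. apply Rmult_le_compat_l; [lra|].
      apply Rinv_le_contravar; nra. }
    pose proof (Rabs_triang (IZR r2 / Q2 - y2) (y2 - y1)).
    pose proof (Rabs_triang (IZR r2 / Q2 - y2 + (y2 - y1)) (y1 - Y1)).
    replace (IZR r2 / Q2 - y2 + (y2 - y1) + (y1 - Y1)) with (IZR r2 / Q2 - Y1) in * by ring.
    rewrite (Rabs_minus_sym y2 y1) in *. lra. }
  assert (a2 : Rabs (th - IZR p2 / Q2) * Rabs (IZR A1) < c * Rpower Q1 s / (Q2 * Rpower Q2 s)).
  { rewrite Rpower_1plus in hth2 by lra.
    apply Rle_lt_trans with (Rabs (th - IZR p2 / Q2) * Rpower Q1 s).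
    - apply Rmult_le_compat_l; auto using Rabs_pos.
    - unfold Rdiv in *. rewrite Rmult_assoc, (Rmult_comm (Rpower Q1 s)), <- Rmult_assoc.
      apply Rmult_lt_compat_r; auto. }
  assert (rat : Rpower Q1 s / Rpower Q2 s <= 1 + Q1 / Q2).
  { replace (Rpower Q1 s / Rpower Q2 s) with (Rpower (Q1 / Q2) s).
    - apply Rpower_le_1plus; [apply Rdiv_lt_0_compat; lra| lra].
    - apply Rmult_eq_reg_r with (Rpower Q2 s); [|lra].
      unfold Rdiv at 2. rewrite Rmult_assoc, Rinv_l, Rmult_1_r by lra.
      rewrite Rpower_mult_distr by (try apply Rdiv_lt_0_compat; lra).
      f_equal. field. lra. }
  assert (hN : Rabs (IZR N) < 1).
  { rewrite eN, Rabs_mult, (Rabs_right Q2) by lra.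
    pose proof (Rabs_triang (b1 * (IZR r2 / Q2 - Y1)) (IZR A1 * (th - IZR p2 / Q2))) as tri.
    rewrite !Rabs_mult in tri. rewrite (Rabs_right b1) in tri by lra.
    assert (u1 : Q2 * (b1 * (c / (Q2 * b2))) < c * X).
    { replace (Q2 * (b1 * (c / (Q2 * b2)))) with (c * (b1 / b2)) by (field; lra).
      apply Rmult_lt_compat_l; auto. apply Rmult_lt_reg_r with b2; [lra|].
      unfold Rdiv; rewrite Rmult_assoc, Rinv_l by lra. lra. }
    assert (u2 : Q2 * (b1 * (4 * c * RR ^ 2 / H)) < 4 * c * RR ^ 2 * X).
    { replace (Q2 * (b1 * (4 * c * RR ^ 2 / H))) with (4 * c * RR ^ 2 * (Q2 * b1) / H) by (field; lra).
      apply Rmult_lt_reg_r with H; auto. unfold Rdiv; rewrite Rmult_assoc, Rinv_l, Rmult_1_r by lra.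
      assert (Q2 * b1 < Q2 * (X*b2)) by (apply Rmult_lt_compat_l; lra).
      assert (X*(Q2*b2) < X*H) by (apply Rmult_lt_compat_l; lra). assert (0 < RR^2) by (apply pow_lt; lra).
      assert (0 < 4*c*RR^2) by (apply Rmult_lt_0_compat; lra).
      rewrite (Rmult_assoc (4*c*RR^2) X H). apply Rmult_lt_compat_l; lra. }
    assert (u3 : Q2 * (b1 * (2 * c / (Q1 * b1))) < 2 * c * RR * X).
    { replace (Q2 * (b1 * (2 * c / (Q1 * b1)))) with (2 * c * (Q2 / Q1)) by (field; lra).
      replace (2*c*RR*X) with ((2*c)*(RR*X)) by ring. apply Rmult_lt_compat_l; [lra|].
      apply Rmult_lt_reg_r with Q1; [lra|]. unfold Rdiv; rewrite Rmult_assoc, Rinv_l, Rmult_1_r by lra.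
      assert (H / RR > 0) by (apply Rdiv_lt_0_compat; lra).
      assert (Q2 * b2 < RR * (Q1 * b1)).
      { apply Rlt_le_trans with H; [lra|]. replace H with (RR * (H / RR)) by (field; lra). nra. }
      nra. }
    assert (u4 : Q2 * (Rabs (IZR A1) * Rabs (th - IZR p2 / Q2)) < c * (1 + RR * X)).
    { apply Rlt_le_trans with (Q2 * (c * Rpower Q1 s / (Q2 * Rpower Q2 s))).
      - apply Rmult_lt_compat_l; [lra|]. rewrite Rmult_comm; auto.
      - replace (Q2 * (c * Rpower Q1 s / (Q2 * Rpower Q2 s))) with (c * (Rpower Q1 s / Rpower Q2 s)) by (field; lra).
        apply Rmult_le_compat_l; [lra|]. apply Rle_trans with (1 + Q1 / Q2); auto.
        assert (Q1 / Q2 <= RR * X); [|lra].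
        apply Rmult_le_reg_r with Q2; [lra|]. unfold Rdiv; rewrite Rmult_assoc, Rinv_l, Rmult_1_r by lra.
        assert (H / RR > 0) by (apply Rdiv_lt_0_compat; lra).
        assert (Q1 * b1 < RR * (Q2 * b2)).
        { apply Rlt_le_trans with H; [lra|]. replace H with (RR * (H / RR)) by (field; lra). nra. }
        nra. }
    assert (big : Q2 * (b1 * Rabs (IZR r2 / Q2 - Y1)) < Q2 * (b1 * (c / (Q2 * b2) + 4 * c * RR ^ 2 / H + 2 * c / (Q1 * b1)))).
    { apply Rmult_lt_compat_l; [lra|]. apply Rmult_lt_compat_l; lra. }
    assert (small : c * X + 4 * c * RR ^ 2 * X + 2 * c * RR * X + c * (1 + RR * X) <= 5 / 8).
    { assert (cRX : c * RR * X <= c * RR ^ 2 * X / 16).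
      { replace (c * RR ^ 2 * X / 16) with ((c * RR * X) * (RR / 16)) by (simpl; field).
        assert (0 <= c * RR * X) by (apply Rmult_le_pos; [nra|lra]). nra. }
      assert (cX : c * X <= c * RR * X / 16).
      { assert (0 <= c * X) by nra. nra. }
      assert (c <= c * X) by nra.
      lra. }
    apply Rle_lt_trans with (Q2 * (b1 * Rabs (IZR r2 / Q2 - Y1) + Rabs (IZR A1) * Rabs (th - IZR p2 / Q2))).
    - apply Rmult_le_compat_l; [lra|]. exact tri.
    - rewrite Rmult_plus_distr_l.
      replace (Q2 * (b1 * (c / (Q2 * b2) + 4 * c * RR ^ 2 / H + 2 * c / (Q1 * b1)))) with
        (Q2 * (b1 * (c / (Q2 * b2))) + Q2 * (b1 * (4 * c * RR ^ 2 / H)) + Q2 * (b1 * (2 * c / (Q1 * b1)))) in big by ring.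
      lra. }
  assert (N0 : N = 0%Z).
  { destruct (Z.eq_dec N 0) as [h|h]; auto. exfalso.
    assert (1 <= Rabs (IZR N)); [|lra].
    rewrite <- abs_IZR. apply IZR_le. lia. }
  unfold N in N0. lia.
Qed.

Lemma exp_le a b : a <= b -> exp a <= exp b.
Proof. intros [h|h]; [left; apply exp_increasing; auto| subst; lra]. Qed.

Lemma lt_exp x a : 0 < x -> ln x < a -> x < exp a.
Proof. intros hx h. rewrite <- (exp_ln x) by auto. apply exp_increasing; auto. Qed.

Lemma le_exp x a : 0 < x -> ln x <= a -> x <= exp a.
Proof. intros hx h. rewrite <- (exp_ln x) by auto. apply exp_le; auto. Qed.

Lemma exp_le_x x a : 0 < x -> a <= ln x -> exp a <= x.
Proof. intros hx h. rewrite <- (exp_ln x) by auto. apply exp_le; auto. Qed.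

Lemma mul_lt_exp x y a b : 0 <= x -> 0 <= y -> x < exp a -> y < exp b -> x * y < exp (a + b).
Proof.
  intros hx hy h1 h2. rewrite exp_plus.
  apply Rle_lt_trans with (exp a * y).
  - apply Rmult_le_compat_r; lra.
  - apply Rmult_lt_compat_l; auto. apply exp_pos.
Qed.

Lemma ln_Rpower_mul h e RR : 0 < h -> 0 < RR ->
  ln (h * Rpower RR e) = ln h + e * ln RR.
Proof. intros. rewrite ln_mult, ln_Rpower; auto. apply Rpower_pos. Qed.

Lemma k2_lines (s t th c RR H : R) (k : nat) (p1 q1 r1 A1 B1 C1 p2 q2 r2 A2 B2 C2 : Z) (y1 y2 : R) :
  0 < t < 1 -> s + t = 1 -> 0 < c -> 16 <= RR -> c <= / 8 * Rpower RR (-2 - 3 / t ^ 2) ->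
  (2 <= k)%nat -> 0 < H ->
  (1 <= q1)%Z -> (1 <= B1)%Z -> (B1 * r1 = A1 * p1 + C1 * q1)%Z ->
  Rabs (IZR A1) <= Rpower (IZR q1) s -> IZR B1 <= Rpower (IZR q1) t ->
  Rabs (th - IZR p1 / IZR q1) < c / Rpower (IZR q1) (1 + s) ->
  Rabs (y1 - IZR r1 / IZR q1) < c / Rpower (IZR q1) (1 + t) ->
  (1 <= q2)%Z -> (1 <= B2)%Z -> (B2 * r2 = A2 * p2 + C2 * q2)%Z ->
  Rabs (IZR A2) <= Rpower (IZR q2) s -> IZR B2 <= Rpower (IZR q2) t ->
  Rabs (th - IZR p2 / IZR q2) < c / Rpower (IZR q2) (1 + s) ->
  Rabs (y2 - IZR r2 / IZR q2) < c / Rpower (IZR q2) (1 + t) ->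
  H / RR <= IZR q1 * IZR B1 < H -> H / RR <= IZR q2 * IZR B2 < H ->
  Rpower H (t / (1 + t)) * Rpower RR (- (3 / t ^ 2) - INR (k - 1) * (1 / (t * (1 + t)))) <= IZR B1 <
  Rpower H (t / (1 + t)) * Rpower RR (- (3 / t ^ 2) - INR (k - 2) * (1 / (t * (1 + t)))) ->
  Rpower H (t / (1 + t)) * Rpower RR (- (3 / t ^ 2) - INR (k - 1) * (1 / (t * (1 + t)))) <= IZR B2 <
  Rpower H (t / (1 + t)) * Rpower RR (- (3 / t ^ 2) - INR (k - 2) * (1 / (t * (1 + t)))) ->
  Rabs (y1 - y2) <= 4 * c * RR ^ (k + 1) / H ->
  (forall P', ratpt P' ->
     Rabs (th - IZR (pt_p P') / IZR (pt_q P')) < c / Rpower (IZR (pt_q P')) (1 + s) ->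
     Rpower (IZR (pt_q P')) (1 + t) < H / RR ^ k ->
     Rabs (y1 - IZR (pt_r P') / IZR (pt_q P')) < c / Rpower (IZR (pt_q P')) (1 + t) -> False) ->
  (A1 * B2 = A2 * B1 /\ C1 * B2 = C2 * B1)%Z.
Proof.
  intros ht hst hc hR hcR hk hH hq1 hB1 e1 hA1 hBt1 hth1 hy1
    hq2 hB2 e2 hA2 hBt2 hth2 hy2 hQ1 hQ2 hw1 hw2 hy12 hsurv.
  assert (es : s = 1 - t) by lra.
  assert (s0 : 0 < s) by lra.
  apply IZR_le in hq1, hB1, hq2, hB2.
  set (Q1 := IZR q1) in *. set (Q2 := IZR q2) in *. set (b1 := IZR B1) in *. set (b2 := IZR B2) in *.
  assert (e1R : b1 * IZR r1 = IZR A1 * IZR p1 + IZR C1 * Q1) by (unfold b1, Q1; rewrite <- !mult_IZR, <- plus_IZR; f_equal; auto).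
  assert (e2R : b2 * IZR r2 = IZR A2 * IZR p2 + IZR C2 * Q2) by (unfold b2, Q2; rewrite <- !mult_IZR, <- plus_IZR; f_equal; auto).
  destruct (dist_Y _ _ _ _ _ _ _ _ _ _ _ hc hq1 hB1 e1R hA1 hBt1 hth1 hy1) as [_ d1].
  destruct (dist_Y _ _ _ _ _ _ _ _ _ _ _ hc hq2 hB2 e2R hA2 hBt2 hth2 hy2) as [_ d2].
  assert (pQ1 : 0 < Q1 * b1) by (apply Rmult_lt_0_compat; lra).
  assert (pQ2 : 0 < Q2 * b2) by (apply Rmult_lt_0_compat; lra).
  assert (pQ1H : 0 < Q1 * b1 * H) by (apply Rmult_lt_0_compat; lra).
  assert (pQ2H : 0 < Q2 * b2 * H) by (apply Rmult_lt_0_compat; lra).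
  set (Y1 := (IZR A1 * th + IZR C1) / b1) in *.
  set (Y2 := (IZR A2 * th + IZR C2) / b2) in *.
  assert (R0 : 0 < RR) by lra.
  set (rho := ln RR). set (lH := ln H). set (l2 := ln 2). set (K := INR k).
  assert (l2p : 0 < l2) by (unfold l2; rewrite <- ln_1; apply ln_increasing; lra).
  assert (rho4 : 4 * l2 <= rho).
  { unfold l2, rho. replace (4 * ln 2) with (ln (2 ^ 4)) by (rewrite ln_pow; [simpl; ring|lra]).
    destruct (Req_dec (2 ^ 4) RR) as [e|e]; [rewrite e; lra|].
    left. apply ln_increasing; [simpl; lra|]. simpl in *. lra. }
  assert (K2 : 2 <= K) by (unfold K; replace 2 with (INR 2) by (simpl; ring); apply le_INR; lia).
  assert (lHp : 0 < lH).
  { unfold lH. rewrite <- ln_1. apply ln_increasing; [lra|]. nra. }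
  destruct (num2 t rho lH K l2 ht l2p rho4 K2) as (nb & nc1 & nc2 & na & npar).
  set (mu := 1 / (t * (1 + t))) in *.
  set (lam := 3 / t ^ 2) in *.
  set (lw := t / (1 + t) * lH - (lam + (K - 2) * mu) * rho) in *.
  set (M := (1 - t) * lH + t * lw + (1 - t) * mu * rho) in *.
  assert (mup : 0 < mu) by (unfold mu; apply Rdiv_lt_0_compat; nra).
  assert (Hp : 0 < Rpower H (t / (1 + t))) by apply Rpower_pos.
  assert (lnh : ln (Rpower H (t / (1 + t))) = t / (1 + t) * lH) by (rewrite ln_Rpower; auto).
  assert (ek1 : INR (k - 1) = K - 1) by (unfold K; rewrite minus_INR by lia; simpl; ring).
  assert (ek2 : INR (k - 2) = K - 2) by (unfold K; rewrite minus_INR by lia; simpl; ring).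
  rewrite ek1, ek2 in hw1, hw2.
  assert (wlo : forall b, Rpower H (t / (1 + t)) * Rpower RR (- lam - (K - 1) * mu) <= b ->
                 lw - mu * rho <= ln b).
  { intros b hb. assert (0 < Rpower H (t / (1 + t)) * Rpower RR (- lam - (K - 1) * mu))
      by (apply Rmult_lt_0_compat; auto; apply Rpower_pos).
    replace (lw - mu * rho) with (ln (Rpower H (t / (1 + t)) * Rpower RR (- lam - (K - 1) * mu))).
    - destruct hb as [hb|hb]; [left; apply ln_increasing; auto|rewrite hb; lra].
    - rewrite ln_Rpower_mul, lnh by auto. unfold lw, rho. ring. }
  assert (whi : forall b, 0 < b -> b < Rpower H (t / (1 + t)) * Rpower RR (- lam - (K - 2) * mu) ->
                 ln b < lw).
  { intros b b0 hb.
    replace lw with (ln (Rpower H (t / (1 + t)) * Rpower RR (- lam - (K - 2) * mu))).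
    - apply ln_increasing; auto.
    - rewrite ln_Rpower_mul, lnh by auto. unfold lw, rho. ring. }
  assert (lo1 := wlo b1 (proj1 hw1)). assert (lo2 := wlo b2 (proj1 hw2)).
  assert (hi1 : ln b1 < lw) by (apply whi; [lra|exact (proj2 hw1)]).
  assert (hi2 : ln b2 < lw) by (apply whi; [lra|exact (proj2 hw2)]).
  assert (b12 : b1 * b2 < exp (2 * lw)).
  { replace (2 * lw) with (lw + lw) by ring. apply mul_lt_exp; try lra; apply lt_exp; lra. }
  assert (Ebound : Rabs (Y1 - Y2) < c * exp (3 * l2 + (K + 1) * rho - lH)).
  { assert (ee : c * exp (3 * l2 + (K + 1) * rho - lH) = 8 * c * RR ^ (k + 1) / H).
    { unfold Rminus. rewrite !exp_plus, exp_Ropp. unfold lH. rewrite exp_ln by auto.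
      replace (3 * l2) with (ln (2 ^ 3)) by (unfold l2; rewrite ln_pow; [simpl; ring|lra]).
      rewrite exp_ln by (simpl; lra).
      replace ((K + 1) * rho) with (INR (k + 1) * ln RR) by (unfold K, rho; rewrite plus_INR; simpl; ring).
      change (exp (INR (k + 1) * ln RR)) with (Rpower RR (INR (k + 1))).
      rewrite Rpower_pow by auto. simpl. field. lra. }
    rewrite ee.
    assert (2 * c / (Q1 * b1) <= 2 * c * RR / H).
    { apply Rmult_le_reg_r with (Q1 * b1 * H); [lra|].
      replace (2 * c / (Q1 * b1) * (Q1 * b1 * H)) with (2 * c * H) by (field; split; lra).
      replace (2 * c * RR / H * (Q1 * b1 * H)) with (2 * c * (RR * (Q1 * b1))) by (field; lra).
      apply Rmult_le_compat_l; [lra|].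
      replace H with (RR * (H / RR)) at 1 by (field; lra). apply Rmult_le_compat_l; lra. }
    assert (2 * c / (Q2 * b2) <= 2 * c * RR / H).
    { apply Rmult_le_reg_r with (Q2 * b2 * H); [lra|].
      replace (2 * c / (Q2 * b2) * (Q2 * b2 * H)) with (2 * c * H) by (field; split; lra).
      replace (2 * c * RR / H * (Q2 * b2 * H)) with (2 * c * (RR * (Q2 * b2))) by (field; lra).
      apply Rmult_le_compat_l; [lra|].
      replace H with (RR * (H / RR)) at 1 by (field; lra). apply Rmult_le_compat_l; lra. }
    assert (RR <= RR ^ (k + 1)).
    { rewrite <- (pow_1 RR) at 1. apply Rle_pow; [lra|lia]. }
    assert (c * RR / H <= c * RR ^ (k + 1) / H).
    { unfold Rdiv. apply Rmult_le_compat_r; [left; apply Rinv_0_lt_compat; lra|].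
      apply Rmult_le_compat_l; lra. }
    pose proof (Rabs_triang (Y1 - y1) (y1 - y2)).
    pose proof (Rabs_triang (Y1 - y1 + (y1 - y2)) (y2 - Y2)).
    replace (Y1 - y1 + (y1 - y2) + (y2 - Y2)) with (Y1 - Y2) in * by ring.
    rewrite (Rabs_minus_sym Y1 y1) in *.
    unfold Rdiv in *. lra. }
  assert (cexp : c <= exp (- (3 * l2) + (-2 - lam) * rho)).
  { eapply Rle_trans; [exact hcR|]. rewrite exp_plus. right. f_equal.
    - rewrite exp_Ropp. f_equal. unfold l2. replace (3 * ln 2) with (ln 8).
      + rewrite exp_ln; lra.
      + replace 8 with (2 ^ 3) by (simpl; ring). rewrite ln_pow; [simpl; ring|lra]. }
  destruct (Z.eq_dec (A1 * B2 - A2 * B1) 0) as [D0|D0].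
  -
    split; [lia|].
    destruct (Z.eq_dec (C1 * B2 - C2 * B1) 0) as [C0|C0]; [lia|exfalso].
    assert (eY : Y1 - Y2 = IZR (C1 * B2 - C2 * B1) / (b1 * b2)).
    { assert (hAB : IZR A1 * b2 = IZR A2 * b1).
      { unfold b1, b2. rewrite <- !mult_IZR. f_equal. lia. }
      unfold Y1, Y2. rewrite minus_IZR, !mult_IZR. fold b1 b2.
      replace ((IZR A1 * th + IZR C1) / b1 - (IZR A2 * th + IZR C2) / b2) with
        ((IZR A1 * b2 * th - IZR A2 * b1 * th + (IZR C1 * b2 - IZR C2 * b1)) / (b1 * b2)) by (field; lra).
      rewrite hAB. f_equal. ring. }
    assert (1 <= Rabs (IZR (C1 * B2 - C2 * B1))).
    { rewrite <- abs_IZR. apply IZR_le. lia. }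
    assert (low : exp (- (2 * lw)) < Rabs (Y1 - Y2)).
    { rewrite eY. unfold Rdiv. rewrite Rabs_mult, Rabs_inv, (Rabs_right (b1 * b2)) by nra.
      rewrite exp_Ropp. apply Rlt_le_trans with (/ (b1 * b2)).
      - apply Rinv_lt_contravar; auto. apply Rmult_lt_0_compat; [nra|apply exp_pos].
      - assert (0 < / (b1 * b2)) by (apply Rinv_0_lt_compat; nra). nra. }
    assert (c * exp (3 * l2 + (K + 1) * rho - lH) <= exp (- (2 * lw))).
    { apply Rle_trans with (exp (- (3 * l2) + (-2 - lam) * rho) * exp (3 * l2 + (K + 1) * rho - lH)).
      - apply Rmult_le_compat_r; [left; apply exp_pos|auto].
      - rewrite <- exp_plus. apply exp_le. specialize (npar lHp). fold lam mu lw in npar. lra. }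
    lra.
  -
    exfalso.
    set (D := (A1 * B2 - A2 * B1)%Z) in *.
    set (d := IZR (Z.abs D)).
    assert (d1' : 1 <= d) by (unfold d; apply IZR_le; lia).
    assert (dD : d = Rabs (IZR D)) by (unfold d; apply abs_IZR).
    assert (Ab : forall A b Q b', 1 <= Q -> 1 <= b -> 1 <= b' -> Rabs A <= Rpower Q s ->
              Q * b < H -> lw - mu * rho <= ln b -> ln b' < lw -> Rabs A * b' < exp M).
    { intros A b Q b' hQ hb hb' hA hQb hlo hhi.
      apply Rle_lt_trans with (Rpower Q s * b').
      - apply Rmult_le_compat_r; lra.
      - unfold Rpower. rewrite <- (exp_ln b') at 1 by lra. rewrite <- exp_plus.
        apply exp_increasing.
        assert (ln Q + ln b < lH) by (rewrite <- ln_mult by lra; apply ln_increasing; nra).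
        assert (s * ln Q < s * (lH - (lw - mu * rho))) by (apply Rmult_lt_compat_l; lra).
        unfold M. rewrite <- es. nra. }
    assert (Ab1 : Rabs (IZR A1) * b2 < exp M) by (apply (Ab _ b1 Q1); lra).
    assert (Ab2 : Rabs (IZR A2) * b1 < exp M) by (apply (Ab _ b2 Q2); lra).
    assert (dM : d < exp (l2 + M)).
    { rewrite exp_plus. unfold l2. rewrite exp_ln by lra.
      rewrite dD. unfold D. rewrite minus_IZR, !mult_IZR. fold b1 b2.
      pose proof (Rabs_triang (IZR A1 * b2) (- (IZR A2 * b1))).
      rewrite Rabs_Ropp, !Rabs_mult, (Rabs_right b1), (Rabs_right b2) in H0 by lra.
      unfold Rminus. lra. }
    assert (lnd : ln d < l2 + M) by (rewrite <- (ln_exp (l2 + M)); apply ln_increasing; lra).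
    assert (dpow : forall e, 0 < e -> Rpower d e < exp (e * (l2 + M))).
    { intros e he. unfold Rpower. apply exp_increasing. apply Rmult_lt_compat_l; auto. }
    destruct (reduce_pt (B1 * C2 - B2 * C1) (A1 * C2 - A2 * C1) D D0)
      as (P' & hP' & hq' & ex' & ey').
    pose proof hP' as [q'p _].
    set (Q' := IZR (pt_q P')) in *.
    assert (Q'1 : 1 <= Q') by (unfold Q'; apply IZR_le; lia).
    assert (Q'd : Q' <= d) by (unfold Q', d; apply IZR_le; auto).
    assert (DR : IZR D <> 0) by (apply not_0_IZR; auto).
    assert (dpos : 0 < d) by lra.
    assert (powle : forall e, 0 <= e -> Rpower Q' e <= Rpower d e).
    { intros e he. apply Rle_Rpower_l; lra. }
    assert (idx : th - IZR (B1 * C2 - B2 * C1) / IZR D = b1 * b2 * (Y1 - Y2) / IZR D).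
    { unfold Y1, Y2, D. rewrite !minus_IZR, !mult_IZR. fold b1 b2.
      unfold D in DR. rewrite minus_IZR, !mult_IZR in DR. fold b1 b2 in DR.
      field. repeat split; lra. }
    assert (idy : IZR (A1 * C2 - A2 * C1) / IZR D - Y1 = - (IZR A1 * b2) * (Y1 - Y2) / IZR D).
    { unfold Y1, Y2, D. rewrite !minus_IZR, !mult_IZR. fold b1 b2.
      unfold D in DR. rewrite minus_IZR, !mult_IZR in DR. fold b1 b2 in DR.
      field. repeat split; lra. }
    set (E := Rabs (Y1 - Y2)) in *.
    set (al := 3 * l2 + (K + 1) * rho - lH) in *.
    assert (E0 : 0 <= E) by apply Rabs_pos.
    apply (hsurv P' hP').
    +
      change (IZR (pt_q P')) with Q'.
      rewrite ex', idx. unfold Rdiv. rewrite !Rabs_mult, Rabs_inv, <- dD.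
      rewrite (Rabs_right b1), (Rabs_right b2) by lra. fold E.
      assert (prod : b1 * b2 * E * Rpower d s < c).
      { apply Rlt_le_trans with (exp (2 * lw) * (c * exp al) * exp (s * (l2 + M))).
        - apply Rmult_le_0_lt_compat.
          + apply Rmult_le_pos; [apply Rmult_le_pos; lra|lra].
          + left; apply Rpower_pos.
          + apply Rle_lt_trans with (b1 * b2 * (c * exp al)).
            * apply Rmult_le_compat_l; [apply Rmult_le_pos; lra|lra].
            * apply Rmult_lt_compat_r; auto. apply Rmult_lt_0_compat; auto. apply exp_pos.
          + apply dpow; auto.
        - replace (exp (2 * lw) * (c * exp al) * exp (s * (l2 + M))) with
            (c * exp (2 * lw + al + s * (l2 + M))) by (rewrite !exp_plus; ring).
          rewrite <- (Rmult_1_r c) at 2. apply Rmult_le_compat_l; [lra|].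
          rewrite <- exp_0. apply exp_le. unfold al. rewrite es. lra. }
      rewrite Rpower_1plus by lra.
      assert (0 < Rpower d s) by apply Rpower_pos.
      assert (Rpower Q' s <= Rpower d s) by (apply powle; lra).
      assert (0 < Rpower Q' s) by apply Rpower_pos.
      apply Rlt_le_trans with (c * / (d * Rpower d s)).
      * apply Rmult_lt_reg_r with (d * Rpower d s); [apply Rmult_lt_0_compat; [lra|apply Rpower_pos]|].
        replace (b1 * b2 * E * / d * (d * Rpower d s)) with (b1 * b2 * E * Rpower d s) by (field; lra).
        replace (c * / (d * Rpower d s) * (d * Rpower d s)) with c by (field; lra). auto.
      * apply Rmult_le_compat_l; [lra|]. apply Rinv_le_contravar; [apply Rmult_lt_0_compat; lra|]. apply Rmult_le_compat; lra.
    +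
      change (IZR (pt_q P')) with Q'.
      apply Rle_lt_trans with (Rpower d (1 + t)); [apply powle; lra|].
      eapply Rlt_le_trans; [apply dpow; lra|].
      replace (H / RR ^ k) with (exp (lH - K * rho)).
      * apply exp_le. lra.
      * unfold Rminus. rewrite exp_plus, exp_Ropp. unfold lH. rewrite exp_ln by auto.
        change (exp (K * rho)) with (Rpower RR K). unfold K. rewrite Rpower_pow by auto. reflexivity.
    +
      change (IZR (pt_q P')) with Q'.
      rewrite ey'.
      assert (e4 : 4 * RR * Rpower d (1 + t) < H).
      { apply Rlt_le_trans with (exp (2 * l2 + rho + (1 + t) * (l2 + M))).
        - rewrite !exp_plus. unfold rho. rewrite exp_ln by lra.
          replace (exp (2 * l2)) with 4.
          2:{ unfold l2. replace (2 * ln 2) with (ln (2 ^ 2)) by (rewrite ln_pow; [simpl; ring|lra]).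
              rewrite exp_ln; simpl; lra. }
          apply Rmult_lt_compat_l; [lra|]. apply dpow; lra.
        - rewrite <- (exp_ln H) by auto. apply exp_le. fold lH. lra. }
      assert (e5 : 2 * (Rabs (IZR A1) * b2) * E * Rpower d t < c).
      { apply Rlt_le_trans with (exp (l2 + M) * (c * exp al) * exp (t * (l2 + M))).
        - apply Rmult_le_0_lt_compat.
          + apply Rmult_le_pos; [|lra]. apply Rmult_le_pos; [lra|]. apply Rmult_le_pos; [apply Rabs_pos|lra].
          + left; apply Rpower_pos.
          + apply Rle_lt_trans with (2 * (Rabs (IZR A1) * b2) * (c * exp al)).
            * apply Rmult_le_compat_l; [|lra]. apply Rmult_le_pos; [lra|]. apply Rmult_le_pos; [apply Rabs_pos|lra].
            * apply Rmult_lt_compat_r; [apply Rmult_lt_0_compat; auto; apply exp_pos|].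
              rewrite exp_plus. unfold l2. rewrite exp_ln by lra. lra.
          + apply dpow; lra.
        - replace (exp (l2 + M) * (c * exp al) * exp (t * (l2 + M))) with
            (c * exp ((1 + t) * (l2 + M) + al)) by (replace ((1 + t) * (l2 + M) + al) with (l2 + M + t * (l2 + M) + al) by ring; rewrite !exp_plus; ring).
          rewrite <- (Rmult_1_r c) at 2. apply Rmult_le_compat_l; [lra|].
          apply Rle_trans with (exp 0); [apply exp_le|rewrite exp_0; lra]. unfold al. lra. }
      assert (Q1b1 : 2 * c / (Q1 * b1) <= 2 * c * RR / H).
      { apply Rmult_le_reg_r with (Q1 * b1 * H); [lra|].
        replace (2 * c / (Q1 * b1) * (Q1 * b1 * H)) with (2 * c * H) by (field; split; lra).
        replace (2 * c * RR / H * (Q1 * b1 * H)) with (2 * c * (RR * (Q1 * b1))) by (field; lra).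
        apply Rmult_le_compat_l; [lra|].
        replace H with (RR * (H / RR)) at 1 by (field; lra). apply Rmult_le_compat_l; lra. }
      assert (pd : 0 < Rpower d (1 + t)) by apply Rpower_pos.
      assert (pdt : 0 < Rpower d t) by apply Rpower_pos.
      assert (t1 : 2 * c * RR / H <= c / (2 * Rpower d (1 + t))).
      { apply Rmult_le_reg_r with (2 * Rpower d (1 + t) * H); [apply Rmult_lt_0_compat; [apply Rmult_lt_0_compat; lra|lra]|].
        replace (2 * c * RR / H * (2 * Rpower d (1 + t) * H)) with (c * (4 * RR * Rpower d (1 + t))) by (field; lra).
        replace (c / (2 * Rpower d (1 + t)) * (2 * Rpower d (1 + t) * H)) with (c * H) by (field; lra).
        apply Rmult_le_compat_l; lra. }
      assert (t2 : Rabs (IZR (A1 * C2 - A2 * C1) / IZR D - Y1) <= c / (2 * Rpower d (1 + t))).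
      { rewrite idy. unfold Rdiv. rewrite !Rabs_mult, Rabs_inv, <- dD, Rabs_Ropp, Rabs_mult, (Rabs_right b2) by lra.
        fold E. rewrite Rpower_1plus by lra.
        apply Rmult_le_reg_r with (2 * d * Rpower d t); [apply Rmult_lt_0_compat; [apply Rmult_lt_0_compat; lra|lra]|].
        replace (Rabs (IZR A1) * b2 * E * / d * (2 * d * Rpower d t)) with (2 * (Rabs (IZR A1) * b2) * E * Rpower d t) by (field; lra).
        replace (c * / (2 * (d * Rpower d t)) * (2 * d * Rpower d t)) with c by (field; lra).
        lra. }
      pose proof (Rabs_triang (y1 - Y1) (Y1 - IZR (A1 * C2 - A2 * C1) / IZR D)).
      replace (y1 - Y1 + (Y1 - IZR (A1 * C2 - A2 * C1) / IZR D)) with (y1 - IZR (A1 * C2 - A2 * C1) / IZR D) in H0 by ring.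
      rewrite (Rabs_minus_sym Y1) in H0.
      assert (c / Rpower d (1 + t) <= c / Rpower Q' (1 + t)).
      { apply Rmult_le_compat_l; [lra|]. apply Rinv_le_contravar; [apply Rpower_pos|apply powle; lra]. }
      assert (c / (2 * Rpower d (1 + t)) + c / (2 * Rpower d (1 + t)) = c / Rpower d (1 + t)) by (field; lra).
      lra.
Qed.

Lemma pt_ext s t theta c LP P : LP_ok s t theta c LP -> inC s theta c P ->
  (1 <= pt_q P)%Z /\ (1 <= ln_B (LP P))%Z /\
  (ln_B (LP P) * pt_r P = ln_A (LP P) * pt_p P + ln_C (LP P) * pt_q P)%Z /\
  Rabs (IZR (ln_A (LP P))) <= Rpower (IZR (pt_q P)) s /\
  IZR (ln_B (LP P)) <= Rpower (IZR (pt_q P)) t /\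
  Rabs (theta - IZR (pt_p P) / IZR (pt_q P)) < c / Rpower (IZR (pt_q P)) (1 + s).
Proof.
  intros hLP hC. destruct (hLP P hC) as ([hB _] & hp & hA & hBt).
  destruct hC as [[hq _] hth].
  rewrite <- abs_IZR. unfold passes in hp. repeat split; auto; lia.
Qed.

Lemma find_m c l beta (N : nat) (X : R) : Hn c l beta 1 <= X -> X < Hn c l beta (S N) ->
  exists m, (1 <= m <= N)%nat /\ Hn c l beta m <= X < Hn c l beta (S m).
Proof.
  induction N as [|N IH]; intros h1 h2.
  - lra.
  - destruct (Rlt_dec X (Hn c l beta (S N))) as [h|h].
    + destruct (IH h1 h) as (m & hm & hx). exists m. split; [lia|auto].
    + exists (S N). split; [lia|split; lra].
Qed.

Theorem lemma4p3
  (s t theta kappa beta a0 l : R)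
  (LP : Z * Z * Z -> Z * Z * Z) (I : list nat -> R * R)
  (hs : 0 < s) (ht : 0 < t) (hst : s + t = 1)
  (hkappa : is_glb (dioph_set s theta) kappa) (hkpos : 0 < kappa)
  (hbeta : 0 < beta < 1) (hl : 0 < l)
  (hLP : LP_ok s t theta (cc kappa l beta t) LP)
  (hI : I_ok beta a0 l I)
  (n k : nat) (hn : (1 <= n)%nat) (hk : (1 <= k <= n)%nat)
  (tau' : list nat)
  (htau' : inS s t theta (cc kappa l beta t) l beta LP I (n - k) tau') :
  let c := cc kappa l beta t in
  let inset (tau : list nat) :=
    vertex beta tau /\ length tau = n /\ prec tau tau' /\
    exists P y, inCnk s t theta c l beta LP n k P /\
                inI (I tau) y /\ inDelta t c P y in
  forall tau1 tau2 tau3, inset tau1 -> inset tau2 -> inset tau3 ->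
    tau1 = tau2 \/ tau1 = tau3 \/ tau2 = tau3.
Proof.
  intros c inset tau1 tau2 tau3 h1 h2 h3.
  fold c in hLP, htau'.
  assert (hR : 16 <= Rc beta) by (left; apply Rc_ge; auto).
  assert (t1 : t < 1) by lra.
  assert (cpos : 0 < c).
  { unfold c, cc. apply Rmin_pos; auto. apply Rmin_pos.
    - apply Rdiv_lt_0_compat; lra.
    - apply Rmult_lt_0_compat; [lra|apply Rpower_pos]. }
  assert (cl : c <= l / (4 * Rc beta)) by (unfold c, cc; eapply Rle_trans; [apply Rmin_r|apply Rmin_l]).
  assert (cR : c <= / 8 * Rpower (Rc beta) (-2 - 3 / t ^ 2)) by (unfold c, cc; eapply Rle_trans; [apply Rmin_r|apply Rmin_r]).
  set (RR := Rc beta) in *.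
  assert (R0 : 0 < RR) by lra.
  set (H := Hn c l beta (S n)).
  assert (Hv : H = 4 * c / l * RR ^ (S n)) by reflexivity.
  assert (Hp : 0 < H) by (rewrite Hv; apply Rmult_lt_0_compat; [apply Rdiv_lt_0_compat; lra|apply pow_lt; lra]).
  assert (Hnn : Hn c l beta n = H / RR) by (rewrite Hv; unfold Hn; fold RR; simpl; field; lra).
  destruct (inS_vertex _ _ _ _ _ _ _ _ _ _ htau') as [vt' lt'].
  assert (len' : l / RR ^ (n - k) = 4 * c * RR ^ (k + 1) / H).
  { rewrite Hv. replace (S n) with ((n - k) + (k + 1))%nat by lia. rewrite (pow_add RR (n - k) (k + 1)).
    field. repeat split; try lra; apply pow_nonzero; lra. }
  assert (iny : forall ya yb, inI (I tau') ya -> inI (I tau') yb -> Rabs (ya - yb) <= 4 * c * RR ^ (k + 1) / H).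
  { intros ya yb [a1 a2] [b1 b2]. destruct hI as [hsz _]. destruct (hsz tau' vt') as [e _].
    fold RR in e. rewrite lt', len' in e. apply Rabs_le. lra. }
  assert (same : forall Pa ya Pb yb, inCnk s t theta c l beta LP n k Pa -> inCnk s t theta c l beta LP n k Pb ->
     inI (I tau') ya -> inI (I tau') yb -> inDelta t c Pa ya -> inDelta t c Pb yb -> LP Pa = LP Pb).
  { intros Pa ya Pb yb ha hb iya iyb da db.
    destruct ha as [[hCa hQa] hwa]. destruct hb as [[hCb hQb] hwb].
    pose proof (iny ya yb iya iyb) as hyab.
    destruct (pt_ext _ _ _ _ _ _ hLP hCa) as (qa1 & Ba1 & ea & hAa & hBta & htha).
    destruct (pt_ext _ _ _ _ _ _ hLP hCb) as (qb1 & Bb1 & eb & hAb & hBtb & hthb).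
    destruct (hLP Pa hCa) as (okA & pA & _). destruct (hLP Pb hCb) as (okB & pB & _).
    rewrite mult_IZR, Hnn in hQa, hQb. fold H in hQa, hQb.
    unfold inDelta in da, db.
    pose proof hCa as [ratA _]. pose proof hCb as [ratB _].
    destruct (Nat.eq_dec k 1) as [k1|k1].
    + subst k. cbn [Nat.eqb] in hwa, hwb. fold H RR in hwa, hwb.
      set (X := Rpower RR (3 / t ^ 2)).
      assert (lam0 : 0 <= 3 / t ^ 2) by (apply Rlt_le, Rdiv_lt_0_compat; [lra|apply pow_lt; lra]).
      assert (X1 : 1 <= X) by (unfold X; rewrite <- (Rpower_O RR) by lra; apply Rle_Rpower; lra).
      assert (Xinv : X * Rpower RR (- (3 / t ^ 2)) = 1).
      { unfold X. rewrite <- Rpower_plus. replace (3 / t ^ 2 + - (3 / t ^ 2)) with 0 by ring. apply Rpower_O; lra. }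
      assert (cX : 8 * c * RR ^ 2 * X <= 1).
      { replace (RR ^ 2) with (Rpower RR 2) by (rewrite <- (Rpower_pow 2 RR) by lra; f_equal; simpl; ring).
        apply Rle_trans with (8 * (/ 8 * Rpower RR (-2 - 3 / t ^ 2)) * Rpower RR 2 * X).
        - apply Rmult_le_compat_r; [lra|]. apply Rmult_le_compat_r; [left; apply Rpower_pos|]. lra.
        - right. unfold X. replace (8 * (/ 8 * Rpower RR (-2 - 3 / t ^ 2)) * Rpower RR 2 * Rpower RR (3 / t ^ 2))
            with (Rpower RR (-2 - 3 / t ^ 2) * Rpower RR 2 * Rpower RR (3 / t ^ 2)) by field.
          rewrite <- !Rpower_plus. replace (-2 - 3 / t ^ 2 + 2 + 3 / t ^ 2) with 0 by ring. apply Rpower_O; lra. }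
      assert (hp0 : 0 < Rpower H (t / (1 + t)) * Rpower RR (- (3 / t ^ 2))) by (apply Rmult_lt_0_compat; apply Rpower_pos).
      assert (rab : IZR (ln_B (LP Pa)) < X * IZR (ln_B (LP Pb))).
      { apply Rlt_le_trans with (Rpower H (t / (1 + t))); [lra|].
        replace (Rpower H (t / (1 + t))) with (X * (Rpower H (t / (1 + t)) * Rpower RR (- (3 / t ^ 2)))).
        - apply Rmult_le_compat_l; lra.
        - rewrite (Rmult_comm (Rpower H _)), <- Rmult_assoc, Xinv. ring. }
      assert (rba : IZR (ln_B (LP Pb)) < X * IZR (ln_B (LP Pa))).
      { apply Rlt_le_trans with (Rpower H (t / (1 + t))); [lra|].
        replace (Rpower H (t / (1 + t))) with (X * (Rpower H (t / (1 + t)) * Rpower RR (- (3 / t ^ 2)))).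
        - apply Rmult_le_compat_l; lra.
        - rewrite (Rmult_comm (Rpower H _)), <- Rmult_assoc, Xinv. ring. }
      change (RR ^ (1 + 1)) with (RR ^ 2) in hyab.
      assert (hyba : Rabs (yb - ya) <= 4 * c * RR ^ 2 / H) by (rewrite Rabs_minus_sym; auto).
      pose proof (k1_on_line s t theta c RR H X _ _ _ _ _ _ _ _ _ _ _ _ ya yb hs ht hst cpos hR X1 cX Hp
        qa1 Ba1 ea hAa hBta htha da qb1 Bb1 eb hAb hBtb hthb db hQa hQb rab rba hyab) as onA.
      pose proof (k1_on_line s t theta c RR H X _ _ _ _ _ _ _ _ _ _ _ _ yb ya hs ht hst cpos hR X1 cX Hp
        qb1 Bb1 eb hAb hBtb hthb db qa1 Ba1 ea hAa hBta htha da hQb hQa rba rab hyba) as onB.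
      destruct (two_points Pa Pb (LP Pa) (LP Pb) ratA ratB okA okB pA onA onB pB) as [e|e].
      * rewrite e; reflexivity.
      * exact e.
    + assert (kf : (k =? 1)%nat = false) by (apply Nat.eqb_neq; auto). rewrite kf in hwa, hwb.
      fold H RR in hwa, hwb.
      assert (k2 : (2 <= k)%nat) by lia.
      assert (surv : forall P', ratpt P' ->
        Rabs (theta - IZR (pt_p P') / IZR (pt_q P')) < c / Rpower (IZR (pt_q P')) (1 + s) ->
        Rpower (IZR (pt_q P')) (1 + t) < H / RR ^ k ->
        Rabs (ya - IZR (pt_r P') / IZR (pt_q P')) < c / Rpower (IZR (pt_q P')) (1 + t) -> False).
      { intros P' hP' happ hht hdel.
        assert (hC' : inC s theta c P') by (split; auto).
        destruct (pt_ext _ _ _ _ _ _ hLP hC') as (q'1 & B'1 & _ & _ & hBt' & _).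
        set (X' := IZR (pt_q P' * ln_B (LP P'))).
        assert (X'le : X' <= Rpower (IZR (pt_q P')) (1 + t)).
        { unfold X'. rewrite mult_IZR, Rpower_1plus by (apply IZR_lt; lia).
          apply Rmult_le_compat_l; auto. apply IZR_le; lia. }
        assert (X'1 : 1 <= X') by (unfold X'; apply IZR_le; nia).
        assert (Hn1 : Hn c l beta 1 <= 1).
        { unfold Hn. fold RR. simpl. apply Rmult_le_reg_r with (l / (4 * c)).
          - apply Rdiv_lt_0_compat; lra.
          - replace (4 * c / l * (RR * 1) * (l / (4 * c))) with RR by (field; lra).
            apply Rmult_le_reg_r with (4 * RR); [lra|].
            replace (1 * (l / (4 * c)) * (4 * RR)) with (l * RR / c) by (field; lra).
            apply Rmult_le_reg_r with c; [lra|].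
            replace (l * RR / c * c) with (l * RR) by (field; lra).
            assert (c * (4 * RR) <= l).
            { apply Rmult_le_reg_r with (/ (4 * RR)); [apply Rinv_0_lt_compat; lra|].
              replace (c * (4 * RR) * / (4 * RR)) with c by (field; lra). exact cl. }
            nra. }
        assert (HnS : Hn c l beta (S (n - k)) = H / RR ^ k).
        { rewrite Hv. unfold Hn. fold RR. replace (S n) with (S (n - k) + k)%nat by lia.
          rewrite (pow_add RR (S (n - k)) k). field. repeat split; try lra; apply pow_nonzero; lra. }
        destruct (find_m c l beta (n - k) X') as (m & hm & hX); [lra|rewrite HnS; lra|].
        apply (survive s t theta c l beta LP I a0 (n - k) tau' hI htau' m P' ya hm); auto.
        split; auto. }
      destruct (k2_lines s t theta c RR H k _ _ _ _ _ _ _ _ _ _ _ _ ya yb (conj ht t1) hst cpos hR cR k2 Hp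
        qa1 Ba1 ea hAa hBta htha da qb1 Bb1 eb hAb hBtb hthb db hQa hQb hwa hwb hyab surv) as [e1 e2].
      apply lines_eq; auto. }
  assert (get : forall tau, inset tau -> exists P y, inCnk s t theta c l beta LP n k P /\
     inI (I tau) y /\ inI (I tau') y /\ inDelta t c P y /\ vertex beta tau /\ length tau = n).
  { intros tau (v & ln & pr & P & y & hP & hy & hd). exists P, y.
    split; [exact hP|split; [exact hy|split; [|split; [exact hd|split; auto]]]].
    apply I_nest with beta a0 l tau; auto. }
  destruct (get _ h1) as (P1 & y1 & hP1 & i1 & i1' & d1 & v1 & ln1).
  destruct (get _ h2) as (P2 & y2 & hP2 & i2 & i2' & d2 & v2 & ln2).
  destruct (get _ h3) as (P3 & y3 & hP3 & i3 & i3' & d3 & v3 & ln3).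
  assert (e2 := same P1 y1 P2 y2 hP1 hP2 i1' i2' d1 d2).
  assert (e3 := same P1 y1 P3 y3 hP1 hP3 i1' i3' d1 d3).
  set (L := LP P1) in *.
  set (Y := (IZR (ln_A L) * theta + IZR (ln_C L)) / IZR (ln_B L)).
  set (Lh := l / RR ^ n).
  assert (Lhp : 0 < Lh) by (apply Rdiv_lt_0_compat; [lra|apply pow_lt; lra]).
  assert (dY : forall P y, inCnk s t theta c l beta LP n k P -> LP P = L -> inDelta t c P y ->
                Rabs (y - Y) < Lh / 2).
  { intros P y hP eL hd. destruct hP as [[hC hQ] _].
    destruct (pt_ext _ _ _ _ _ _ hLP hC) as (q1 & B1 & e & hA & hBt & hth).
    rewrite eL in *. unfold inDelta in hd.
    apply IZR_le in q1, B1.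
    assert (eR : IZR (ln_B L) * IZR (pt_r P) = IZR (ln_A L) * IZR (pt_p P) + IZR (ln_C L) * IZR (pt_q P)).
    { rewrite <- !mult_IZR, <- plus_IZR. f_equal; auto. }
    destruct (dist_Y _ _ _ _ _ _ _ _ _ _ _ cpos q1 B1 eR hA hBt hth hd) as [_ hd'].
    fold Y in hd'. rewrite mult_IZR, Hnn in hQ. fold H in hQ.
    apply Rlt_le_trans with (2 * c / (IZR (pt_q P) * IZR (ln_B L))); auto.
    assert (2 * c * RR / H = Lh / 2).
    { unfold Lh. rewrite Hv. simpl. field. repeat split; try lra; apply pow_nonzero; lra. }
    rewrite <- H0.
    assert (pQ : 0 < IZR (pt_q P) * IZR (ln_B L)) by (apply Rmult_lt_0_compat; lra).
    apply Rmult_le_reg_r with (IZR (pt_q P) * IZR (ln_B L) * H); [apply Rmult_lt_0_compat; lra|].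
    replace (2 * c / (IZR (pt_q P) * IZR (ln_B L)) * (IZR (pt_q P) * IZR (ln_B L) * H)) with (2 * c * H) by (field; lra).
    replace (2 * c * RR / H * (IZR (pt_q P) * IZR (ln_B L) * H)) with (2 * c * (RR * (IZR (pt_q P) * IZR (ln_B L)))) by (field; lra).
    apply Rmult_le_compat_l; [lra|].
    replace H with (RR * (H / RR)) at 1 by (field; lra). apply Rmult_le_compat_l; lra. }
  assert (a1 := dY P1 y1 hP1 eq_refl d1).
  assert (a2 := dY P2 y2 hP2 (eq_sym e2) d2).
  assert (a3 := dY P3 y3 hP3 (eq_sym e3) d3).
  assert (len : forall tau, vertex beta tau -> length tau = n -> snd (I tau) - fst (I tau) = Lh).
  { intros tau v ln. destruct hI as [hsz _]. destruct (hsz tau v) as [e _]. rewrite ln in e. exact e. }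
  pose proof (len _ v1 ln1) as l1. pose proof (len _ v2 ln2) as l2. pose proof (len _ v3 ln3) as l3.
  destruct i1 as [i1a i1b]. destruct i2 as [i2a i2b]. destruct i3 as [i3a i3b].
  apply Rabs_def2 in a1. apply Rabs_def2 in a2. apply Rabs_def2 in a3.
  destruct (list_eq_dec Nat.eq_dec tau1 tau2) as [E|E12]; [left; auto|].
  destruct (list_eq_dec Nat.eq_dec tau1 tau3) as [E|E13]; [right; left; auto|].
  destruct (list_eq_dec Nat.eq_dec tau2 tau3) as [E|E23]; [right; right; auto|].
  exfalso.
  destruct (I_sep beta a0 l I tau1 tau2 hbeta hl hI v1 v2 ltac:(lia) E12) as [s12|s12];
  destruct (I_sep beta a0 l I tau1 tau3 hbeta hl hI v1 v3 ltac:(lia) E13) as [s13|s13];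
  destruct (I_sep beta a0 l I tau2 tau3 hbeta hl hI v2 v3 ltac:(lia) E23) as [s23|s23]; lra.
Qed.
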